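(* Let $F:\mathbb{R}^n\rightrightarrows\mathbb{R}^n$ be a (possibly multi-valued) mapping and consider the system $x_{t+1}=x_t+u_t$, $y_t\in F(x_t+u_t)$, $t\in\mathbb{N}_0$, with $x_t,u_t,y_t\in\mathbb{R}^n$. This system is cyclo-passive if and only if $F$ is cyclically monotone.
   Context: A trajectory $t\mapsto(x_t,u_t,y_t)$ is admissible if $x_{t+1}=x_t+u_t$ and $y_t\in F(x_t+u_t)$ for all $t\in\mathbb{N}_0$. The system is cyclo-passive if $\sum_{t=t_1}^{t_2-1}u_t^\top y_t\ge 0$ holds for all $t_1,t_2\in\mathbb{N}_0$ with $t_1\le t_2$ and all admissible trajectories satisfying $x_{t_2}=x_{t_1}$. The mapping $F$ is cyclically monotone if $\sum_{j=0}^m w_j^\top(v_j-v_{j+1})\ge 0$ for every $m\in\mathbb{N}_0$, all points $v_0,\ldots,v_m\in\mathbb{R}^n$, all $w_j\in F(v_j)$ ($j=0,\dots,m$), where $v_{m+1}:=v_0$. *)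

(* Defs.v *)
From mathcomp Require Import all_boot all_order all_algebra.
From mathcomp Require Import reals.
Set Implicit Arguments. Unset Strict Implicit. Unset Printing Implicit Defensive.
Import Order.TTheory GRing.Theory Num.Theory.
Local Open Scope ring_scope.

(* Vectors of R^n are row vectors 'rV[R]_n; a set-valued map
   F : R^n ⇉ R^n is a relation: y \in F x  <->  F x y. *)

Definition dotv (R : realType) (n : nat) (a b : 'rV[R]_n) : R :=
  \sum_(i < n) a 0 i * b 0 i.

Definition admissible (R : realType) (n : nat)
    (F : 'rV[R]_n -> 'rV[R]_n -> Prop)
    (x u y : nat -> 'rV[R]_n) : Prop :=
  forall t : nat, x t.+1 = x t + u t /\ F (x t + u t) (y t).

Definition cyclo_passive (R : realType) (n : nat)
    (F : 'rV[R]_n -> 'rV[R]_n -> Prop) : Prop :=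
  forall (x u y : nat -> 'rV[R]_n), admissible F x u y ->
  forall t1 t2 : nat, (t1 <= t2)%N -> x t2 = x t1 ->
    0 <= \sum_(t1 <= t < t2) dotv (u t) (y t).

Definition cyclically_monotone (R : realType) (n : nat)
    (F : 'rV[R]_n -> 'rV[R]_n -> Prop) : Prop :=
  forall (m : nat) (v w : nat -> 'rV[R]_n),
    (forall j : nat, (j <= m)%N -> F (v j) (w j)) ->
    0 <= \sum_(0 <= j < m.+1)
           dotv (w j) (v j - (if j == m then v 0%N else v j.+1)).

(* Main.v *)
Require Import Defs.
From mathcomp Require Import all_boot all_order all_algebra.
From mathcomp Require Import reals.
From mathcomp Require Import zify.
Import Order.TTheory GRing.Theory Num.Theory.
Local Open Scope ring_scope.

Lemma dotvC (R : realType) (n : nat) (a b : 'rV[R]_n) : dotv a b = dotv b a.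
Proof. by rewrite /dotv; apply: eq_bigr => i _; rewrite mulrC. Qed.

Lemma cm_cp (R : realType) (n : nat) (F : 'rV[R]_n -> 'rV[R]_n -> Prop) :
  cyclically_monotone F -> cyclo_passive F.
Proof.
move=> CM x u y adm t1 t2 le12 ex.
have [->|lt12] := eqVneq t1 t2.
  by rewrite big_geq.
have {lt12} : (t1 < t2)%N by rewrite ltn_neqAle lt12 le12.
move=> lt12.
have [m e2] : exists m, t2 = (t1 + m.+1)%N by exists (t2 - t1).-1; lia.
subst t2.
set v := fun j => x (t1 + m.+1 - j)%N.
set w := fun j => y (t1 + m - j)%N.
have := CM m v w.
have Fvw : forall j, (j <= m)%N -> F (v j) (w j).
  move=> j hj; rewrite /v /w.
  have -> : (t1 + m.+1 - j = (t1 + m - j).+1)%N by lia.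
  by have [e h] := adm (t1 + m - j)%N; rewrite e.
move=> /(_ Fvw) H; apply: (le_trans H) => {H}.
rewrite -{1}[t1]add0n big_addn addKn big_nat_rev /=.
rewrite le_eqVlt; apply/orP; left; apply/eqP; apply: eq_big_nat => i /andP [_ hi].
have hi' : (i <= m)%N by lia.
rewrite add0n.
have -> : (m.+1 - i.+1 = m - i)%N by lia.
rewrite dotvC /w /v.
have -> : (t1 + m - (m - i) = i + t1)%N by lia.
congr dotv.
have [e _] := adm (i + t1)%N.
have -> : u (i + t1)%N = x (i + t1).+1 - x (i + t1)%N.
  by rewrite e addrAC subrr add0r.
have -> : (t1 + m.+1 - (m - i) = (i + t1).+1)%N by lia.
congr (_ - _).
case: eqP => [h|ne].
  by rewrite subn0 ex; congr x; lia.
congr x; lia.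
Qed.

Lemma cp_cm (R : realType) (n : nat) (F : 'rV[R]_n -> 'rV[R]_n -> Prop) :
  cyclo_passive F -> cyclically_monotone F.
Proof.
move=> CP m v w Fvw.
pose g t := if (0 < t)%N && (t <= m)%N then (m.+1 - t)%N else 0%N.
have gm : forall t, (g t <= m)%N.
  by move=> t; rewrite /g; case: ifP => /= h; lia.
have g1 : forall j, (j <= m)%N -> g (m - j).+1 = j.
  move=> j hj; rewrite /g; case: ifP => h.
    lia.
  move/negbT: h; rewrite negb_and -!ltnNge => /orP [h|h]; lia.
have g2 : forall j, (j < m)%N -> g (m - j)%N = j.+1.
  move=> j hj; rewrite /g; case: ifP => h.
    lia.
  move/negbT: h; rewrite negb_and -!ltnNge => /orP [h|h]; lia.
have g0 : g 0%N = 0%N by [].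
pose x t := v (g t).
pose u t := x t.+1 - x t.
pose y t := w (g t.+1).
have adm : admissible F x u y.
  move=> t; split; first by rewrite /u addrC subrK.
  by rewrite /u addrC subrK /x /y; apply: Fvw.
have := CP x u y adm 0%N m.+1 (leq0n _).
have e : x m.+1 = x 0%N.
  by rewrite /x; have := g1 0%N (leq0n _); rewrite subn0 => ->.
move=> /(_ e) H; apply: (le_trans H).
rewrite big_nat_rev /= le_eqVlt; apply/orP; left; apply/eqP.
apply: eq_big_nat => j /andP [_ hj].
have hj' : (j <= m)%N by lia.
rewrite add0n.
have -> : (m.+1 - j.+1 = m - j)%N by lia.
rewrite dotvC /y g1 //; congr dotv.
rewrite /u /x g1 //; congr (_ - _).
case: eqP => [->|ne].
  by rewrite subnn g0.
by rewrite g2 //; lia.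
Qed.

Theorem lemma4 (R : realType) (n : nat) (F : 'rV[R]_n -> 'rV[R]_n -> Prop) :
  cyclo_passive F <-> cyclically_monotone F.
Proof. split; [exact: cp_cm | exact: cm_cp]. Qed.
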